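(* If $N = q^k n^2$ is an odd perfect number given in Eulerian form, then $q < n\sqrt{3}$.
   Context: For a positive integer $x$, $\sigma(x)$ denotes the sum of the positive divisors of $x$. A positive integer $N$ is perfect if $\sigma(N) = 2N$. An odd perfect number $N$ is said to be given in Eulerian form if $N = q^k n^2$ where $q$ is a prime, $q \equiv k \equiv 1 \pmod 4$, $n$ is a positive integer, and $\gcd(q,n) = 1$. *)

(* Defs.v *)
From mathcomp Require Import all_boot.

(* sigma x = sum of the positive divisors of x (divisors 0 = [::]) *)
Definition sigma (x : nat) : nat := \sum_(d <- divisors x) d.

Definition perfect (N : nat) : Prop := 0 < N /\ sigma N = 2 * N.

Definition eulerian_form (N q k n : nat) : Prop :=
  odd N /\ perfect N /\ N = q ^ k * n ^ 2 /\ prime q /\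
  q %% 4 = 1 /\ k %% 4 = 1 /\ 0 < n /\ coprime q n.

(* Main.v *)
Require Import Defs.
From mathcomp Require Import all_boot zify.
Local Notation sig := Defs.sigma.

Lemma sigma_mul a b : 0 < a -> 0 < b -> coprime a b ->
  sig (a * b) = sig a * sig b.
Proof.
move=> a0 b0 cab.
rewrite /Defs.sigma big_distrlr /=.
rewrite -(big_allpairs_dep (h := muln) (r1 := divisors a) (r2 := fun _ => divisors b) (F := id)) /=.
apply: perm_big.
apply: uniq_perm.
- exact: divisors_uniq.
- apply: allpairs_uniq; [exact: divisors_uniq | exact: divisors_uniq |].
  move=> [x1 y1] [x2 y2] /allpairsP [[u v] [/= u1 v1 [-> ->]]] /allpairsP [[u' v'] [/= u2 v2 [-> ->]]] /= E.
  rewrite -dvdn_divisors // in u1; rewrite -dvdn_divisors // in u2.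
  rewrite -dvdn_divisors // in v1; rewrite -dvdn_divisors // in v2.
  have h1 : gcdn (u * v) a = u.
    rewrite gcdnC Gauss_gcdl; first by apply/gcdn_idPr.
    by apply: coprime_dvdr v1 cab.
  have h2 : gcdn (u' * v') a = u'.
    rewrite gcdnC Gauss_gcdl; first by apply/gcdn_idPr.
    by apply: coprime_dvdr v2 cab.
  have eu : u = u' by rewrite -h1 -h2 E.
  subst u'; congr (_, _).
  have : 0 < u by apply: dvdn_gt0 a0 u1.
  move=> u0; by apply/eqP; rewrite -(eqn_pmul2l u0) E.
move=> d; rewrite -dvdn_divisors ?muln_gt0 ?a0 //.
apply/idP/allpairsP.
- move=> dab; exists (gcdn d a, gcdn d b) => /=.
  rewrite -dvdn_divisors // -dvdn_divisors // !dvdn_gcdr; split => //.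
  apply/eqP; rewrite eqn_dvd; apply/andP; split.
    rewrite muln_gcdr dvdn_gcd dvdn_mull //= muln_gcdl dvdn_gcd dvdn_mulr //.
  rewrite Gauss_dvd ?dvdn_gcdl //.
  apply: coprime_dvdl (dvdn_gcdr _ _) _; apply: coprime_dvdr (dvdn_gcdr _ _) cab.
- move=> [[u v] [/= u1 v1 ->]].
  rewrite -dvdn_divisors // in u1; rewrite -dvdn_divisors // in v1; exact: dvdn_mul.
Qed.

Definition G (r n : nat) := \sum_(i < n) r ^ i.

Lemma sigma_pow r b : prime r -> sig (r ^ b) = G r b.+1.
Proof.
move=> pr; rewrite /Defs.sigma /G.
have r1 := prime_gt1 pr.
rewrite -(big_mkord xpredT (fun i => r ^ i)) /index_iota subn0.
rewrite -(big_map (fun i => r ^ i) xpredT id).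
apply: perm_big; apply: uniq_perm.
- exact: divisors_uniq.
- rewrite map_inj_uniq ?iota_uniq //; exact: expnI.
move=> d; rewrite -dvdn_divisors ?expn_gt0 ?prime_gt0 //.
apply/idP/idP.
- case/(@dvdn_pfactor r d b pr) => i ib ->; apply/mapP; exists i => //; rewrite mem_iota; lia.
- case/mapP => i; rewrite mem_iota => ib ->; apply/(@dvdn_pfactor r _ b pr); exists i => //; lia.
Qed.

Lemma G_split r u w : G r (u + w) = G r u + r ^ u * G r w.
Proof.
rewrite /G big_split_ord /= big_distrr /=; congr (_ + _).
by apply: eq_bigr => i _; rewrite expnD.
Qed.

Lemma G_geom r n : 0 < r -> (r - 1) * G r n + 1 = r ^ n.
Proof.
move=> r0; elim: n => [|n IH]; first by rewrite /G big_ord0 muln0.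
rewrite /G big_ord_recr /= -/(G r n) mulnDr expnS.
have: r * r ^ n = (r - 1) * r ^ n + r ^ n by rewrite mulnBl mul1n subnK // leq_pmull.
lia.
Qed.

Lemma G_pos r n : 0 < n -> 0 < G r n.
Proof. by case: n => // n _; rewrite /G big_ord_recl /= expn0 addSn. Qed.

Lemma sigma_ge x : 0 < x -> x <= sig x.
Proof.
move=> x0; rewrite /Defs.sigma (bigD1_seq x) ?divisors_id ?divisors_uniq //= leq_addr.
by [].
Qed.

Lemma decomp p m : prime p -> 0 < m -> p %| sig m ->
  exists r b m', [/\ prime r, 0 < b, m = r ^ b * m', coprime r m' & p %| sig (r ^ b)].
Proof.
move=> pp; elim/ltn_ind: m => m IH m0 pd.
case: (leqP m 1) => [m1 | m1].
  have e : m = 1 by lia.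
  subst m; move: pd; rewrite /Defs.sigma /= big_cons big_nil addn0 dvdn1 => /eqP e.
  by subst p.
pose r := pdiv m; have pr : prime r := pdiv_prime m1.
have [m'' cm'' em] := pfactor_coprime pr m0.
set b := logn r m in em.
have b0 : 0 < b by rewrite logn_gt0 mem_primes pr m0 pdiv_dvd.
have m''0 : 0 < m'' by move: m0; rewrite em muln_gt0 => /andP[].
have rb1 : 1 < r ^ b by rewrite -(expn0 r) ltn_exp2l // prime_gt1.
have rb0 : 0 < r ^ b by apply: ltnW.
have cop : coprime m'' (r ^ b) by rewrite coprime_sym coprimeXl.
move: pd; rewrite em sigma_mul //.
rewrite Euclid_dvdM // => /orP [pd | pd]; last first.
  by exists r, b, m''; split => //; rewrite mulnC.
have lt : m'' < m by rewrite em -{1}(muln1 m'') ltn_pmul2l.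
have [r' [b' [m2 [pr' b'0 e' c' pd']]]] := IH m'' lt m''0 pd.
exists r', b', (m2 * r ^ b); split => //.
  by rewrite e' mulnA.
rewrite coprimeMr c' /=; apply: coprimeXr.
rewrite coprime_sym; apply: coprime_dvdr cm''.
by rewrite e' dvdn_mulr // dvdn_exp.
Qed.

Lemma aux1 r X B : 2 < r -> (r - 1) * X + 1 = r * B -> 2 * X < 3 * B.
Proof. nia. Qed.
Lemma aux2 r G R t : 2 < r -> (r - 1) * G + 1 = R -> R <= G + t -> R <= t * t.
Proof.
move=> r3 e D.
have h : 2 * G <= (r - 1) * G by rewrite leq_mul2r; apply/orP; right; lia.
have h2 : R < 2 * t by lia.
nia.
Qed.
Lemma aux3 p t s w R B : 0 < t -> 0 < p -> 2 * p * t < 3 * B -> R <= t * t -> t <= s ->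
  p + 1 = 2 * w * R -> p * p < 3 * (B * (w * s)).
Proof.
move=> t0 p0 k1 k2 ts ep.
have h1 : p * p < p * (2 * w * R) by rewrite -ep ltn_pmul2l // addn1.
have h2 : (2 * p * t) * (w * R) < (3 * B) * (w * R).
  rewrite ltn_pmul2r // muln_gt0; apply/andP; split; lia.
have h3 : R <= t * s by apply: leq_trans k2 _; rewrite leq_mul2l ts orbT.
have h4 : (3 * B) * (w * R) <= (3 * B) * (w * (t * s)) by rewrite leq_mul2l leq_mul2l h3 !orbT.
have h5 : t * (p * (2 * w * R)) < t * (3 * (B * (w * s))).
  lia.
rewrite ltn_pmul2l // in h5; lia.
Qed.

Lemma aux_w p : p %% 4 = 1 -> exists w, p + 1 = 2 * w /\ 0 < w.
Proof. move=> h; exists ((p + 1) %/ 2); lia. Qed.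
Lemma aux_E2 p R w t X S m : w * R * (p * t * X) = p * (R * S * m) ->
  p * R * (w * t * X) = p * R * (S * m).
Proof. move=> H; lia. Qed.
Lemma aux_eq1 p t G R Y w : p * t + t = 2 * w * R * t -> p * t = G + R * Y ->
  G + t + R * Y = R * (2 * w * t).
Proof. move=> H1 H2; lia. Qed.

Arguments decomp {p m}.
Arguments aux1 {r X B}.
Arguments aux2 {r G R t}.
Arguments aux3 {p t s w R B}.
Arguments aux_eq1 {p t G R Y w}.

Lemma G1 r : G r 1 = 1.
Proof. by rewrite /G big_ord_recl big_ord0. Qed.

Lemma case1 p m : prime p -> odd m -> 0 < m -> coprime p m -> p %% 4 = 1 ->
  (p + 1) * sig m = 2 * p * m -> p * p < 3 * m.
Proof.
move=> pp om m0 cpm p4 E.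
have p0 := prime_gt0 pp.
have [w [ew w0]] := @aux_w p p4.
have ws : w * sig m = p * m.
  apply/eqP; rewrite -(eqn_pmul2l (_ : 0 < 2)) //; apply/eqP.
  by rewrite mulnA -ew E -mulnA.
have cwp : coprime w p.
  have : coprime p (2 * w) by rewrite -ew addn1 coprimenS.
  by rewrite coprimeMr => /andP[_]; rewrite coprime_sym.
have wm : w %| m by rewrite -(Gauss_dvdr _ cwp) -ws dvdn_mulr.
have ps : p %| sig m.
  have cpw : coprime p w by rewrite coprime_sym.
  by rewrite -(Gauss_dvdr _ cpw) ws dvdn_mulr.
have [r [b [m' [pr b0 em cm' prb]]]] := decomp pp m0 ps.
have r1 := prime_gt1 pr.
have rm : r %| m by rewrite em dvdn_mulr // dvdn_exp.
have r3 : 2 < r.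
  rewrite ltn_neqAle r1 andbT; apply/eqP => e.
  by move: (dvdn_odd rm om); rewrite -e.
have B0 : 0 < r ^ b by rewrite expn_gt0 ltnW.
have m'0 : 0 < m' by move: m0; rewrite em muln_gt0 => /andP[].
set t := sig (r ^ b) %/ p.
have et : sig (r ^ b) = p * t by rewrite mulnC divnK.
have [w' cw' ew'] := pfactor_coprime pr w0.
set v := logn r w in ew'.
have R0 : 0 < r ^ v by rewrite expn_gt0 ltnW.
have w'0 : 0 < w' by move: w0; rewrite ew' muln_gt0 => /andP[].
have vb : v <= b.
  rewrite -(dvdn_Pexp2l _ _ r1) -(Gauss_dvdl _ (_ : coprime (r ^ v) m')).
    by rewrite -em; apply: dvdn_trans wm; rewrite ew' dvdn_mull.
  by rewrite coprimeXl.
have eB : r ^ b = r ^ v * r ^ (b - v) by rewrite -expnD subnKC.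
have S0 : 0 < r ^ (b - v) by rewrite expn_gt0 ltnW.
have sm : sig m = p * t * sig m'.
  by rewrite em sigma_mul // ?et // coprimeXl.
have E2 : w' * t * sig m' = r ^ (b - v) * m'.
  apply/eqP; rewrite -(eqn_pmul2l (_ : 0 < p * r ^ v)) ?muln_gt0 ?p0 //; apply/eqP.
  move: ws; rewrite sm ew' em eB => H; exact: aux_E2.
have crG : coprime r (sig (r ^ b)).
  rewrite sigma_pow // -addn1 addnC G_split G1 expn1.
  by rewrite /coprime addnC mulnC gcdnMDl gcdn1.
have crt : coprime r t by apply: coprime_dvdr crG; rewrite et dvdn_mull.
have w'm' : w' %| m'.
  rewrite -(Gauss_dvdr _ (_ : coprime w' (r ^ (b - v)))); last first.
    by rewrite coprime_sym coprimeXl // coprime_sym.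
  by rewrite -E2 -mulnA dvdn_mulr.
set s := m' %/ w'.
have es : m' = w' * s by rewrite mulnC divnK.
have s0 : 0 < s by move: m'0; rewrite es muln_gt0 => /andP[].
have E3 : t * sig m' = r ^ (b - v) * s.
  apply/eqP; rewrite -(eqn_pmul2l w'0); apply/eqP.
  by rewrite mulnA E2 es mulnCA.
have ts : t %| s.
  rewrite -(Gauss_dvdr _ (_ : coprime t (r ^ (b - v)))); last first.
    by rewrite coprime_sym coprimeXl.
  by rewrite -E3 dvdn_mulr.
have t0 : 0 < t by move: (@G_pos r b.+1 (ltn0Sn b)); rewrite -sigma_pow // et muln_gt0 => /andP[].
have tles : t <= s by apply: dvdn_leq.
have key1 : 2 * p * t < 3 * r ^ b.
  have := @G_geom r b.+1 (ltnW r1); rewrite -sigma_pow // et expnS => H.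
  rewrite -mulnA; exact: (aux1 r3 H).
have ep : p + 1 = 2 * w' * r ^ v by rewrite ew ew' mulnA.
have key2 : r ^ v <= t * t.
  case: (posnP v) => [-> | v0]; first by rewrite expn0 muln_gt0 t0.
  have Gs : sig (r ^ b) = G r v + r ^ v * G r (b.+1 - v).
    by rewrite sigma_pow // -{1}(subnKC (leqW vb)) G_split.
  have geo := @G_geom r v (ltnW r1).
  have eq1 : G r v + t + r ^ v * G r (b.+1 - v) = r ^ v * (2 * w' * t).
    have H : p * t + t = 2 * w' * r ^ v * t by rewrite -ep mulnDl mul1n.
    by apply: (aux_eq1 H); rewrite -et Gs.
  have : r ^ v %| G r v + t + r ^ v * G r (b.+1 - v) by rewrite eq1 dvdn_mulr.
  rewrite dvdn_addl ?dvdn_mulr // => /dvdn_leq D.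
  exact: (aux2 r3 geo (D (ltn_addl _ t0))).
have em2 : m = r ^ b * (w' * s) by rewrite em es.
rewrite em2.
exact: (aux3 t0 p0 key1 key2 tles ep).
Qed.


Lemma nat_main N q k n : eulerian_form N q k n -> q * q < 3 * (n * n).
Proof.
move=> [oN [[N0 sN] [eN [pq [q4 [k4 [n0 cqn]]]]]]].
have q1 := prime_gt1 pq.
have nn0 : 0 < n * n by rewrite muln_gt0 n0.
have Q0 : 0 < q ^ k by rewrite expn_gt0 ltnW.
have cQ : coprime (q ^ k) (n * n) by apply: coprimeXl; rewrite coprimeMr cqn.
have en2 : n ^ 2 = n * n by [].
rewrite en2 in eN.
have E : sig (q ^ k) * sig (n * n) = 2 * (q ^ k * (n * n)).
  by rewrite -sigma_mul // -eN.
have om : odd (n * n) by move: oN; rewrite eN oddM => /andP[].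
have [k1 | k5] : k = 1 \/ 1 < k by lia.
  subst k; have cqm : coprime q (n * n) by rewrite coprimeMr cqn.
  apply: (@case1 q (n * n) pq om nn0 cqm q4).
  move: E; rewrite sigma_pow // -(addn1 1) G_split G1 !expn1 muln1 => E.
  rewrite addnC; lia.
have Gs : sig (q ^ k) = G q k + q ^ k.
  by rewrite sigma_pow // -addn1 G_split G1 muln1.
have Gk := @G_pos q k (ltnW k5).
have cq : coprime (q ^ k) (sig (q ^ k)).
  apply: coprimeXl; rewrite sigma_pow // -addn1 addnC G_split G1 expn1.
  by rewrite /coprime addnC mulnC gcdnMDl gcdn1.
have dv : q ^ k %| sig (n * n).
  rewrite -(Gauss_dvdr _ cq) E dvdn_mull // dvdn_mulr //.
have s0 : 0 < sig (n * n) by have := @sigma_ge (n * n) nn0; lia.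
have le1 := dvdn_leq s0 dv.
have qk : q ^ 2 <= q ^ k by rewrite leq_pexp2l // ltnW.
rewrite Gs in E.
have : sig (n * n) < 2 * (n * n) by nia.
rewrite /= expnS expn1 in qk.
lia.
Qed.

From Stdlib Require Import Reals Lra Psatz.

Theorem lemma3 (N q k n : nat) :
  eulerian_form N q k n -> Rlt (INR q) (Rmult (INR n) (sqrt (INR 3))).
Proof.
move=> H; have := @nat_main N q k n H => /ltP Hl.
have H2 : Rlt (Rmult (INR q) (INR q)) (Rmult (INR 3) (Rmult (INR n) (INR n))).
  rewrite -!mult_INR; apply: lt_INR; rewrite !multE; exact: Hl.
have s3 : Rmult (sqrt (INR 3)) (sqrt (INR 3)) = INR 3.
  rewrite sqrt_sqrt //; apply: pos_INR.
have s0 : Rle 0 (sqrt (INR 3)) by apply: sqrt_pos.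
have n0 : Rle 0 (INR n) by apply: pos_INR.
have q0 : Rle 0 (INR q) by apply: pos_INR.
apply: Rnot_le_lt => C.
have C2 : Rle (Rmult (Rmult (INR n) (sqrt (INR 3))) (Rmult (INR n) (sqrt (INR 3)))) (Rmult (INR q) (INR q)).
  apply: Rmult_le_compat => //; apply: Rmult_le_pos => //.
have E3 : Rmult (Rmult (INR n) (sqrt (INR 3))) (Rmult (INR n) (sqrt (INR 3))) = Rmult (INR 3) (Rmult (INR n) (INR n)).
  transitivity (Rmult (Rmult (INR n) (INR n)) (Rmult (sqrt (INR 3)) (sqrt (INR 3)))); first ring.
  rewrite s3; ring.
rewrite E3 in C2; lra.
Qed.
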